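(* For every $n\ge1$ and every LHS assemblage $\{\rho_{b|y}\}$ on $\mathbb C^2$, $$|\mathsf W_n|\ \le\ \frac{\sin\left(\frac{\pi}{2}\mathsf T_n\right)}{n\sin\left(\frac{\pi}{2n}\right)}.$$
   Context: Let $\theta_y=y\pi/n$. An LHS assemblage on $\mathbb C^2$ with inputs $y\in\{0,\dots,n-1\}$ and outcomes $b\in\{0,1,\varnothing\}$ is $\rho_{b|y}=\sum_\lambda p(b|y,\lambda)\rho_\lambda$, where $\{\rho_\lambda\}$ is a finite family of positive semidefinite $2\times2$ matrices with $\sum_\lambda\mathrm{tr}\rho_\lambda=1$ and $p(b|y,\lambda)$ are conditional probabilities. With $Z,X$ the Pauli matrices, $\mathsf W_n:=\frac1n\sum_{y=0}^{n-1}\mathrm{tr}\big[(\cos\theta_y Z+\sin\theta_y X)(\rho_{0|y}-\rho_{1|y})\big]$ and $\mathsf T_n:=\frac1n\sum_{y=0}^{n-1}\mathrm{tr}(\rho_{0|y}+\rho_{1|y})$. *)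

(* Defs.v *)
From HB Require Import structures.
From mathcomp Require Import all_boot all_order all_algebra.
From mathcomp Require Import all_classical all_reals.
From mathcomp Require Import trigo.
From mathcomp Require Import complex.
Set Implicit Arguments. Unset Strict Implicit. Unset Printing Implicit Defensive.
Import Order.TTheory GRing.Theory Num.Theory.
Local Open Scope ring_scope.
Local Open Scope complex_scope.

Definition adj_mx (R : realType) m k (A : 'M[R[i]]_(m, k)) : 'M[R[i]]_(k, m) :=
  \matrix_(i, j) (A j i)^*.

(* positive semidefinite 2x2 complex matrix: Hermitian with
   nonnegative quadratic form (0 <= z in R[i] means z is real and >= 0) *)
Definition psd2 (R : realType) (A : 'M[R[i]]_2) : Prop :=
  adj_mx A = A /\ forall v : 'cV[R[i]]_2, 0 <= (adj_mx v *m A *m v) 0 0.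

Definition pauliZ (R : realType) : 'M[R[i]]_2 :=
  \matrix_(i < 2, j < 2) (if i == j then (if val i == 0%N then 1 else -1) else 0).
Definition pauliX (R : realType) : 'M[R[i]]_2 :=
  \matrix_(i < 2, j < 2) (if i == j then 0 else 1).

Definition theta (R : realType) (n : nat) (y : nat) : R := (y%:R * pi) / n%:R.

(* outcomes b in {0, 1, \varnothing}, encoded as 'I_3 with 2 = \varnothing *)
Definition out0 : 'I_3 := @Ordinal 3 0 isT.
Definition out1 : 'I_3 := @Ordinal 3 1 isT.

(* LHS assemblage given by a finite family rho : 'I_m -> 2x2 matrices and
   conditional probabilities p y lambda b *)
Definition is_LHS (R : realType) (n m : nat) (rho : 'I_m -> 'M[R[i]]_2)
  (p : 'I_n -> 'I_m -> 'I_3 -> R) : Prop :=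
  (forall l, psd2 (rho l)) /\
  \sum_(l < m) \tr (rho l) = 1 /\
  (forall y l b, 0 <= p y l b) /\
  (forall y l, \sum_(b < 3) p y l b = 1).

Definition assemb (R : realType) (n m : nat) (rho : 'I_m -> 'M[R[i]]_2)
  (p : 'I_n -> 'I_m -> 'I_3 -> R) (b : 'I_3) (y : 'I_n) : 'M[R[i]]_2 :=
  \sum_(l < m) (p y l b)%:C *: rho l.

(* W_n and T_n; the traces involved are real (Hermitian matrices), and we take
   their real parts to view them in R *)
Definition W_n (R : realType) (n m : nat) (rho : 'I_m -> 'M[R[i]]_2)
  (p : 'I_n -> 'I_m -> 'I_3 -> R) : R :=
  n%:R^-1 * \sum_(y < n) complex.Re (\tr
    (((cos (@theta R n y))%:C *: pauliZ R + (sin (@theta R n y))%:C *: pauliX R)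
      *m (assemb rho p out0 y - assemb rho p out1 y))).

Definition T_n (R : realType) (n m : nat) (rho : 'I_m -> 'M[R[i]]_2)
  (p : 'I_n -> 'I_m -> 'I_3 -> R) : R :=
  n%:R^-1 * \sum_(y < n) complex.Re (\tr (assemb rho p out0 y + assemb rho p out1 y)).

(* Main.v *)
Require Import Defs.
From HB Require Import structures.
From mathcomp Require Import all_boot all_order all_algebra.
From mathcomp Require Import all_classical all_reals.
From mathcomp Require Import interval_inference topology normedtype derive realfun.
From mathcomp Require Import trigo.
From mathcomp Require Import complex.
From mathcomp Require Import ring lra.
Import Order.TTheory GRing.Theory Num.Theory numFieldNormedType.Exports.
Local Open Scope ring_scope.

Module Aux.
Set Implicit Arguments. Unset Strict Implicit. Unset Printing Implicit Defensive.

Section Trig.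
Variable R : realType.
Implicit Types s t a c h g x y : R.

Lemma sin_mvt s t : s <= t -> exists2 c, s <= c <= t & sin t - sin s = cos c * (t - s).
Proof.
move=> st.
have [|c cI E] := @MVT_segment R sin cos s t st (fun x _ => is_derive_sin x).
  exact/continuous_subspaceT/continuous_sin.
by exists c => //; move: cI; rewrite in_itv.
Qed.

Lemma cos_le_mono (x y : R) : 0 <= x -> y <= pi -> x <= y -> cos y <= cos x.
Proof.
move=> x0 ypi xy.
rewrite leNgt ltr_cos ?in_itv /= ?x0 ?(le_trans xy) ?(le_trans x0) //; lra.
Qed.

Lemma cos_abs_le a c : `|c| <= a -> a <= pi -> cos a <= cos c.
Proof. by move=> ca api; rewrite -[cos c]cos_norm; apply: cos_le_mono. Qed.

Lemma cos_abs_ge a c : 0 <= a -> a <= `|c| -> `|c| <= pi -> cos c <= cos a.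
Proof. by move=> a0 ac cpi; rewrite -[cos c]cos_norm; apply: cos_le_mono. Qed.

Lemma M1 a s t : a <= pi -> - a <= s -> s <= t -> t <= a ->
  (t - s) * cos a <= sin t - sin s.
Proof.
move=> api sa st ta; have [c /andP[sc ct] ->] := sin_mvt st.
rewrite [cos c * _]mulrC ler_wpM2l ?subr_ge0 //; apply: cos_abs_le => //.
rewrite ler_norml; lra.
Qed.

Lemma M2 a s t : 0 <= a -> a <= s -> s <= t -> t <= pi ->
  sin t - sin s <= (t - s) * cos a.
Proof.
move=> a0 sa st ta; have [c /andP[sc ct] ->] := sin_mvt st.
rewrite [cos c * _]mulrC ler_wpM2l ?subr_ge0 //; apply: cos_abs_ge => //.
  by rewrite ger0_norm; lra.
by rewrite ger0_norm; lra.
Qed.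

Lemma M3 a s t : 0 <= a -> - pi <= s -> s <= t -> t <= - a ->
  sin t - sin s <= (t - s) * cos a.
Proof.
move=> a0 sa st ta; have [c /andP[sc ct] ->] := sin_mvt st.
rewrite [cos c * _]mulrC ler_wpM2l ?subr_ge0 //; apply: cos_abs_ge => //.
  by rewrite ler0_norm; lra.
by rewrite ler0_norm; lra.
Qed.


Definition Psi a t := sin t - t * cos a.
Definition clamp a t := Num.max (- a) (Num.min t a).
Definition Phi a t := Psi a (clamp a t).

Lemma clampL a t : 0 <= a -> t <= - a -> clamp a t = - a.
Proof.
move=> a0 ta; rewrite /clamp.
have -> : Num.min t a = t by apply/min_idPl; lra.
by apply/max_idPl.
Qed.

Lemma clampM a t : - a <= t -> t <= a -> clamp a t = t.
Proof.
move=> aTt ta; rewrite /clamp.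
have -> : Num.min t a = t by apply/min_idPl.
by apply/max_idPr.
Qed.

Lemma clampR a t : 0 <= a -> a <= t -> clamp a t = a.
Proof.
move=> a0 ta; rewrite /clamp.
have -> : Num.min t a = a by apply/min_idPr.
by apply/max_idPr; lra.
Qed.

Lemma Phi_incr a x y : 0 <= a -> a <= pi -> - pi <= x -> x <= y -> y <= pi ->
  0 <= Phi a y - Phi a x /\ Psi a y - Psi a x <= Phi a y - Phi a x.
Proof.
move=> a0 api px xy yp; rewrite /Phi /Psi.
have Ma := M1 api (lexx (- a)) (_ : - a <= a) (lexx a).
have [xa|ax] := lerP x (- a).
  rewrite (clampL a0 xa).
  have [ya|ay] := lerP y (- a).
    rewrite (clampL a0 ya); have := M3 a0 px xy ya; lra.
  have [ya'|ay'] := lerP y a.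
    rewrite (clampM (ltW ay) ya').
    have := M1 api (lexx (-a)) (ltW ay) ya'; have := M3 a0 px xa (lexx (-a)); lra.
  rewrite (clampR a0 (ltW ay')).
  have := Ma ltac:(lra); have := M3 a0 px xa (lexx (-a)).
  have := M2 a0 (lexx a) (ltW ay') yp; lra.
have [xa'|ax'] := lerP x a.
  rewrite (clampM (ltW ax) xa').
  have [ya'|ay'] := lerP y a.
    rewrite (clampM (le_trans (ltW ax) xy) ya').
    have := M1 api (ltW ax) xy ya'; lra.
  rewrite (clampR a0 (ltW ay')).
  have := M1 api (ltW ax) xa' (lexx a).
  have := M2 a0 (lexx a) (ltW ay') yp; lra.
rewrite (clampR a0 (ltW ax')) (clampR a0 (le_trans (ltW ax') xy)).
have := M2 a0 (ltW ax') xy yp; lra.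
Qed.

Lemma Phi_bound a t : 0 <= a -> a <= pi ->
  Psi a (- a) <= Phi a t <= Psi a a.
Proof.
move=> a0 api; rewrite /Phi /Psi.
have [ta|aTt] := lerP t (- a); first by rewrite (clampL a0 ta); have := M1 api (lexx (- a)) (_ : - a <= a) (lexx a); lra.
have [ta'|aTt'] := lerP t a.
  rewrite (clampM (ltW aTt) ta').
  have := M1 api (lexx (-a)) (ltW aTt) ta'; have := M1 api (ltW aTt) ta' (lexx a); lra.
by rewrite (clampR a0 (ltW aTt')); have := M1 api (lexx (- a)) (_ : - a <= a) (lexx a); lra.
Qed.


Lemma window a h g : 0 <= a -> a <= pi -> 0 < h -> - pi <= g - h -> g + h <= pi ->
  0 <= Phi a (g + h) - Phi a (g - h) /\ (sin h * cos g - h * cos a) * 2 <= Phi a (g + h) - Phi a (g - h).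
Proof.
move=> a0 api h0 gp gp'.
have ghh : g - h <= g + h by lra.
have [P1 P2] := Phi_incr a0 api gp ghh gp'.
split; first exact: P1.
move: P2; rewrite /Psi sinD sinB; lra.
Qed.

Lemma term_bound a h g (q : R) : 0 <= a -> a <= pi -> 0 < h -> - pi <= g - h -> g + h <= pi ->
  0 <= q <= 1 ->
  q * cos g * sin h <= q * (h * cos a) + (Phi a (g + h) - Phi a (g - h)) / 2.
Proof.
move=> a0 api h0 gp gp' /andP[q0 q1].
have [E0 ED] := window a0 api h0 gp gp'.
set E := Phi a (g + h) - Phi a (g - h) in E0 ED *.
set D := sin h * cos g - h * cos a in ED *.
have -> : q * cos g * sin h = q * D + q * (h * cos a) by rewrite /D; ring.
have : q * D <= E / 2 by nra.
lra.
Qed.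

Lemma KL a h c n (q : nat -> R) : 0 <= a -> a <= pi / 2 -> 0 < h -> h <= pi / 2 ->
  (forall i, (i < n)%N -> - (pi / 2) <= c + 2 * h * i%:R <= pi / 2) ->
  (forall i, 0 <= q i <= 1) ->
  (\sum_(i < n) q i * cos (c + 2 * h * i%:R)) * sin h <=
    sin a + (h * \sum_(i < n) q i - a) * cos a.
Proof.
move=> a0 api h0 hpi Hc Hq.
have api' : a <= pi by have := pi_gt0 R; lra.
pose f k := Phi a (c + 2 * h * k%:R - h).
have step : forall i : 'I_n, q i * cos (c + 2 * h * i%:R) * sin h <=
    q i * (h * cos a) + (f i.+1 - f i) / 2.
  move=> i; have := Hc i (ltn_ord i) => /andP[g1 g2].
  have -> : f i.+1 = Phi a ((c + 2 * h * i%:R) + h) by rewrite /f -addn1 natrD; congr Phi; ring.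
  have -> : f i = Phi a ((c + 2 * h * i%:R) - h) by [].
  apply: term_bound => //; lra.
rewrite mulr_suml.
apply: (le_trans (ler_sum _ (fun i _ => step i))).
rewrite big_split /= -big_distrl -big_distrl /=.
rewrite -(big_mkord xpredT (fun i => f i.+1 - f i)) telescope_sumr //.
have := Phi_bound (c + 2 * h * n%:R - h) a0 api'.
have := Phi_bound (c + 2 * h * 0%:R - h) a0 api'.
rewrite /f /Psi sinN; lra.
Qed.


Lemma sum_periodic (F : nat -> R) n k : (forall j, F (j + n)%N = F j) ->
  \sum_(k <= j < k + n) F j = \sum_(0 <= j < n) F j.
Proof.
move=> HF; elim: k => [|k IH]; first by rewrite add0n.
have e1 : \sum_(k <= j < (k + n).+1) F j = F k + \sum_(k.+1 <= j < (k + n).+1) F j.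
  by rewrite big_ltn // ltnS leq_addr.
have e2 : \sum_(k <= j < (k + n).+1) F j = \sum_(k <= j < k + n) F j + F (k + n)%N.
  by rewrite big_nat_recr //= leq_addr.
rewrite addSn -IH.
have : F (k + n)%N = F k by rewrite HF.
lra.
Qed.

End Trig.

Section R1.
Variable R : realType.

Lemma R1 n (hn : (1 <= n)%N) (q : 'I_n -> R) (u v a : R) :
  u ^+ 2 + v ^+ 2 = 1 -> 0 <= a -> a <= pi / 2 -> (forall y, 0 <= q y <= 1) ->
  (\sum_(y < n) q y * `|u * cos (@theta R n y) + v * sin (@theta R n y)|) * sin (pi / (2 * n%:R))
   <= sin a + (pi / (2 * n%:R) * \sum_(y < n) q y - a) * cos a.
Proof.
move=> uv a0 api Hq.
wlog u0 : u v uv / 0 <= u.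
  move=> Hw; have [u0|u0] := lerP 0 u; first exact: Hw.
  have E : \sum_(y < n) q y * `|u * cos (@theta R n y) + v * sin (@theta R n y)| =
     \sum_(y < n) q y * `|(- u) * cos (@theta R n y) + (- v) * sin (@theta R n y)|.
    by apply: eq_bigr => y _; rewrite -normrN; congr (_ * `|_|); ring.
  rewrite E; apply: Hw; [rewrite !sqrrN // | lra].
set h := pi / (2 * n%:R).
have n0 : (n%:R : R) != 0 by rewrite pnatr_eq0 -lt0n.
have n1 : (1 : R) <= n%:R by rewrite ler1n.
have pi0 := pi_gt0 R.
have e2hn : 2 * h * n%:R = pi by rewrite /h; field.
have h0 : 0 < h by rewrite /h divr_gt0 // mulr_gt0 // ltr0n.
have hpi : h <= pi / 2 by nra.
have v1 : -1 <= v <= 1 by apply/andP; split; nra.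
set phi := asin v.
have sphi : sin phi = v by rewrite /phi asinK // in_itv /= v1.
have cphi : cos phi = u.
  rewrite /phi cos_asin // (_ : 1 - v ^+ 2 = u ^+ 2); last by lra.
  by rewrite sqrtr_sqr ger0_norm.
have phi1 : - (pi / 2) <= phi by apply: asin_geNpi2.
have phi2 : phi <= pi / 2 by apply: asin_lepi2.
have th : forall y : nat, @theta R n y = 2 * h * y%:R by move=> y; rewrite /theta /h; field.
pose Q (j : nat) := q (Ordinal (ltn_pmod j hn)).
pose F (j : nat) := Q j * `|cos (2 * h * j%:R - phi)|.
have LHSeq : \sum_(y < n) q y * `|u * cos (@theta R n y) + v * sin (@theta R n y)|
    = \sum_(0 <= j < n) F j.
  rewrite big_mkord; apply: eq_bigr => y _; rewrite /F /Q; congr (_ * _).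
    by congr q; apply: val_inj; rewrite /= modn_small.
  by rewrite th cosB sphi cphi; congr `|_|; ring.
have Fper : forall j, F (j + n)%N = F j.
  move=> j; rewrite /F /Q.
  have -> : Ordinal (ltn_pmod (j + n) hn) = Ordinal (ltn_pmod j hn).
    by apply: val_inj; rewrite /= modnDr.
  have -> : 2 * h * (j + n)%N%:R - phi = (2 * h * j%:R - phi) + pi.
    by rewrite natrD -e2hn; ring.
  by rewrite cosDpi normrN.
have Qper : forall j, Q (j + n)%N = Q j.
  move=> j; rewrite /Q; congr q; by apply: val_inj; rewrite /= modnDr.
have exP : exists k, phi + pi / 2 <= 2 * h * k%:R by exists n; rewrite e2hn; lra.
case: (ex_minnP exP) => k Pk kmin.
have kup : 2 * h * k%:R <= phi + pi / 2 + 2 * h.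
  move: Pk kmin; case: k => [|k] Pk kmin; first by rewrite mulr0; lra.
  have : ~~ (phi + pi / 2 <= 2 * h * k%:R) by apply/negP => /kmin; rewrite ltnn.
  rewrite -ltNge => H; rewrite -[k.+1%:R]natr1 mulrDr mulr1; lra.
have shift : forall G : nat -> R, \sum_(k <= j < k + n) G j = \sum_(i < n) G (i + k)%N.
  by move=> G; rewrite (addnC k n) -{1}[k]add0n big_addn addnK big_mkord.
set c := 2 * h * k%:R - phi - pi.
have Hc : forall i, (i < n)%N -> - (pi / 2) <= c + 2 * h * i%:R <= pi / 2.
  move=> i ilt; have : (i%:R : R) + 1 <= n%:R by rewrite natr1 ler_nat.
  move=> iln; apply/andP; split.
    have : 0 <= 2 * h * i%:R by rewrite mulr_ge0 // mulr_ge0 //; lra.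
    rewrite /c; lra.
  have : 2 * h * i%:R <= 2 * h * (n%:R - 1) by apply: ler_wpM2l; lra.
  rewrite mulrBr mulr1 e2hn /c; lra.
have Hq' : forall i, 0 <= Q (i + k)%N <= 1 by move=> i; exact: Hq.
have KLi := @KL R a h c n (fun i => Q (i + k)%N) a0 api h0 hpi Hc Hq'.
have sumq : \sum_(y < n) q y = \sum_(i < n) Q (i + k)%N.
  rewrite -shift sum_periodic // big_mkord; apply: eq_bigr => y _.
  by rewrite /Q; congr q; apply: val_inj; rewrite /= modn_small.
rewrite LHSeq -(sum_periodic k Fper) shift sumq.
apply: le_trans KLi; apply: ler_wpM2r.
  by apply: sin_ge0_pi; apply/andP; split; lra.
rewrite le_eqVlt; apply/orP; left; apply/eqP.
apply: eq_bigr => i _; rewrite /F; congr (_ * _).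
have -> : 2 * h * (i + k)%N%:R - phi = (c + 2 * h * i%:R) + pi by rewrite natrD /c; ring.
by rewrite cosDpi normrN ger0_norm // cos_ge0_pihalf // Hc.
Qed.

Lemma R2 n (hn : (1 <= n)%N) (q : 'I_n -> R) (u v t a : R) :
  u ^+ 2 + v ^+ 2 <= t ^+ 2 -> 0 <= t -> 0 <= a -> a <= pi / 2 -> (forall y, 0 <= q y <= 1) ->
  (\sum_(y < n) q y * `|u * cos (@theta R n y) + v * sin (@theta R n y)|) * sin (pi / (2 * n%:R))
   <= t * (sin a + (pi / (2 * n%:R) * \sum_(y < n) q y - a) * cos a).
Proof.
move=> uvt t0 a0 api Hq.
set h := pi / (2 * n%:R).
set S := \sum_(y < n) q y.
have pi0 := pi_gt0 R.
have n0 : (0 : R) < n%:R by rewrite ltr0n.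
have h0 : 0 < h by rewrite /h divr_gt0 // mulr_gt0 // ltr0n.
have S0 : 0 <= S by apply: sumr_ge0 => y _; have /andP[] := Hq y.
have ca : 0 <= cos a by apply: cos_ge0_pihalf; apply/andP; split; lra.
have sa : (a - 0) * cos a <= sin a - sin 0 by apply: M1 => //; lra.
rewrite sin0 in sa.
have B0 : 0 <= sin a + (h * S - a) * cos a.
  have : 0 <= h * S * cos a by rewrite mulr_ge0 // mulr_ge0 //; lra.
  nra.
set r := Num.sqrt (u ^+ 2 + v ^+ 2).
have r0 : 0 <= r := sqrtr_ge0 _.
have r2 : r ^+ 2 = u ^+ 2 + v ^+ 2 by rewrite /r sqr_sqrtr // addr_ge0 // sqr_ge0.
have rt : r <= t by nra.
have [rz|rnz] := eqVneq r 0.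
  have u0 : u = 0 by move: r2; rewrite rz; nra.
  have v0 : v = 0 by move: r2; rewrite rz; nra.
  rewrite big1 ?mul0r ?mulr_ge0 // => y _; rewrite u0 v0 !mul0r addr0 normr0 mulr0 //.
set u' := u / r; set v' := v / r.
have eu : u = r * u' by rewrite /u' mulrC divfK.
have ev : v = r * v' by rewrite /v' mulrC divfK.
have uv1 : u' ^+ 2 + v' ^+ 2 = 1.
  have : r ^+ 2 * (u' ^+ 2 + v' ^+ 2) = r ^+ 2 * 1 by rewrite mulr1 {2}r2 /u' /v'; field.
  by move/mulfI; apply; rewrite expf_neq0.
have E : \sum_(y < n) q y * `|u * cos (@theta R n y) + v * sin (@theta R n y)| =
  r * \sum_(y < n) q y * `|u' * cos (@theta R n y) + v' * sin (@theta R n y)|.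
  rewrite mulr_sumr; apply: eq_bigr => y _.
  have -> : u * cos (@theta R n y) + v * sin (@theta R n y) =
     r * (u' * cos (@theta R n y) + v' * sin (@theta R n y)) by rewrite eu ev; ring.
  by rewrite normrM (ger0_norm r0); ring.
rewrite E -mulrA.
have K := R1 hn uv1 a0 api Hq.
apply: le_trans (_ : r * (sin a + (h * S - a) * cos a) <= _).
  by apply: ler_wpM2l.
by apply: ler_wpM2r.
Qed.

End R1.

Section M.
Variable R : realType.

Lemma ReD (x y : R[i]) : complex.Re (x + y) = complex.Re x + complex.Re y.
Proof. by case: x; case: y. Qed.
Lemma Re0 : complex.Re (0 : R[i]) = 0. Proof. by []. Qed.
Lemma ReN (x : R[i]) : complex.Re (- x) = - complex.Re x.
Proof. by case: x. Qed.
Lemma ReB (x y : R[i]) : complex.Re (x - y) = complex.Re x - complex.Re y.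
Proof. by rewrite ReD ReN. Qed.
Lemma ReMC (r : R) (x : R[i]) : complex.Re ((r%:C)%C * x) = r * complex.Re x.
Proof. by case: x => a b /=; ring. Qed.
Lemma Re_sum I (s : seq I) (P : pred I) (F : I -> R[i]) :
  complex.Re (\sum_(i <- s | P i) F i) = \sum_(i <- s | P i) complex.Re (F i).
Proof. by apply: (big_morph _ ReD Re0). Qed.

Lemma trZX (c s : R) (A : 'M[R[i]]_2) :
 complex.Re (\tr (((c%:C)%C *: pauliZ R + (s%:C)%C *: pauliX R) *m A)) =
   c * (complex.Re (A ord0 ord0) - complex.Re (A ord_max ord_max)) +
   s * (complex.Re (A ord0 ord_max) + complex.Re (A ord_max ord0)).
Proof.
rewrite /mxtrace !big_ord_recr !big_ord0 /= !mxE !big_ord_recr !big_ord0 /= !mxE /=.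
have -> : widen_ord (leqnSn 1) ord_max = ord0 :> 'I_2 by apply: val_inj.
rewrite !(mulr1, mulr0, addr0, add0r, mulrN1, mulNr) !ReD !ReN !ReMC; ring.
Qed.

Lemma conjRC (r : R) : ((r%:C)^*)%C = (r%:C)%C.
Proof. by rewrite /= oppr0. Qed.

Lemma psd_quad (A : 'M[R[i]]_2) (s t : R) : psd2 A ->
  0 <= complex.Re (A ord0 ord0) * s ^+ 2 + complex.Re (A ord_max ord_max) * t ^+ 2
     + complex.Re (A ord0 ord_max + A ord_max ord0) * s * t.
Proof.
case=> _ /(_ (\col_(i < 2) (if val i == 0%N then s else t)%:C%C)).
rewrite lecE => /andP[_].
rewrite /adj_mx !mxE !big_ord_recr !big_ord0 /= !mxE /= !big_ord_recr !big_ord0 /= !mxE /=.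
have -> : widen_ord (leqnSn 1) ord_max = ord0 :> 'I_2 by apply: val_inj.
case: (A ord0 ord0) (A ord0 ord_max) (A ord_max ord0) (A ord_max ord_max) => [a1 a2] [b1 b2] [c1 c2] [d1 d2] /=.
move=> H; apply: le_trans H _; rewrite le_eqVlt; apply/orP; left; apply/eqP; ring.
Qed.

Lemma trRe (A : 'M[R[i]]_2) :
  complex.Re (\tr A) = complex.Re (A ord0 ord0) + complex.Re (A ord_max ord_max).
Proof.
rewrite /mxtrace !big_ord_recr big_ord0 /= add0r ReD.
by have -> : widen_ord (leqnSn 1) ord_max = ord0 :> 'I_2 by apply: val_inj.
Qed.

Lemma Re_assemb n m (rho : 'I_m -> 'M[R[i]]_2) (p : 'I_n -> 'I_m -> 'I_3 -> R) b y i j :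
  complex.Re (assemb rho p b y i j) = \sum_(l < m) p y l b * complex.Re (rho l i j).
Proof.
rewrite /assemb summxE Re_sum; apply: eq_bigr => l _.
by rewrite mxE ReMC.
Qed.

End M.

Section RL.
Variable R : realType.

Lemma p01_le1 n m (p : 'I_n -> 'I_m -> 'I_3 -> R) y l :
  (forall y l b, 0 <= p y l b) -> (forall y l, \sum_(b < 3) p y l b = 1) ->
  p y l out0 + p y l out1 <= 1.
Proof.
move=> p0 p1; rewrite -(p1 y l) (bigD1 out0) // (bigD1 out1) //= addrA lerDl.
by apply: sumr_ge0.
Qed.

Lemma RL n m (hn : (1 <= n)%N) (al de X : 'I_m -> R) (p : 'I_n -> 'I_m -> 'I_3 -> R) :
  (forall l, 0 <= al l) -> (forall l, 0 <= de l) -> (forall l, X l ^+ 2 <= 4 * al l * de l) ->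
  \sum_(l < m) (al l + de l) = 1 -> (forall y l b, 0 <= p y l b) ->
  (forall y l, \sum_(b < 3) p y l b = 1) ->
  `| n%:R^-1 * \sum_(y < n) \sum_(l < m) (p y l out0 - p y l out1) *
        (cos (@theta R n y) * (al l - de l) + sin (@theta R n y) * X l) |
  <= sin (pi / 2 * (n%:R^-1 * \sum_(y < n) \sum_(l < m) (p y l out0 + p y l out1) * (al l + de l)))
      / (n%:R * sin (pi / (2 * n%:R))).
Proof.
move=> al0 de0 HX tt1 p0 p1.
set h := pi / (2 * n%:R).
pose g y l := cos (@theta R n y) * (al l - de l) + sin (@theta R n y) * X l.
pose q y l := p y l out0 + p y l out1.
pose tt l := al l + de l.
have pi0 := pi_gt0 R.
have n0 : (0 : R) < n%:R by rewrite ltr0n.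
have h0 : 0 < h by rewrite /h divr_gt0 // mulr_gt0 // ltr0n.
have hpi : h <= pi / 2.
  have e : h * (2 * n%:R) = pi by rewrite /h; field; lra.
  have : (1 : R) <= n%:R by rewrite ler1n.
  nra.
have sh0 : 0 < sin h by apply: sin_gt0_pi; apply/andP; split; lra.
have hq : forall y l, 0 <= q y l <= 1.
  by move=> y l; apply/andP; split; [rewrite addr_ge0 | apply: p01_le1].
have tt0 : forall l, 0 <= tt l by move=> l; rewrite addr_ge0.
set Tsum := \sum_(y < n) \sum_(l < m) q y l * tt l.
have Ts0 : 0 <= Tsum.
  apply: sumr_ge0 => y _; apply: sumr_ge0 => l _; apply: mulr_ge0 => //.
  by have /andP[] := hq y l.
have Ts1 : Tsum <= n%:R.
  have -> : (n%:R : R) = \sum_(y < n) \sum_(l < m) tt l.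
    by rewrite (eq_bigr (fun _ => 1)) ?sumr_const ?card_ord // => y _; rewrite tt1.
  apply: ler_sum => y _; apply: ler_sum => l _.
  by rewrite ler_piMl //; have /andP[] := hq y l.
set a := pi / 2 * (n%:R^-1 * Tsum).
have a0 : 0 <= a by rewrite /a mulr_ge0 // ?mulr_ge0 // ?invr_ge0; lra.
have T1' : n%:R^-1 * Tsum <= 1 by rewrite mulrC ler_pdivrMr // mul1r.
have T0' : 0 <= n%:R^-1 * Tsum by rewrite mulr_ge0 // invr_ge0; lra.
have api : a <= pi / 2 by rewrite /a; nra.
have ha : h * Tsum = a by rewrite /a /h; field; lra.
rewrite ler_pdivlMr; last by rewrite mulr_gt0.
rewrite normrM ger0_norm ?invr_ge0; last lra.
have -> : n%:R^-1 * `|\sum_(y < n) \sum_(l < m) (p y l out0 - p y l out1) * g y l| *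
    (n%:R * sin h) = `|\sum_(y < n) \sum_(l < m) (p y l out0 - p y l out1) * g y l| * sin h.
  by field; lra.
have S1 : `|\sum_(y < n) \sum_(l < m) (p y l out0 - p y l out1) * g y l| <=
    \sum_(l < m) \sum_(y < n) q y l * `|g y l|.
  rewrite [X in _ <= X]exchange_big /=; apply: le_trans (ler_norm_sum _ _ _) _.
  apply: ler_sum => y _; apply: le_trans (ler_norm_sum _ _ _) _.
  apply: ler_sum => l _; rewrite normrM; apply: ler_wpM2r => //.
  rewrite /q ler_norml; have := p0 y l out0; have := p0 y l out1; lra.
apply: le_trans (ler_wpM2r (ltW sh0) S1) _.
rewrite mulr_suml.
apply: le_trans (_ : \sum_(l < m) tt l * (sin a + (h * \sum_(y < n) q y l - a) * cos a) <= _).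
  apply: ler_sum => l _.
  have uvt : (al l - de l) ^+ 2 + X l ^+ 2 <= tt l ^+ 2.
    by rewrite /tt; have := HX l; nra.
  have := R2 hn (q := fun y => q y l) uvt (tt0 l) a0 api (fun y => hq y l).
  rewrite -/h; apply: le_trans; rewrite ler_wpM2r //; first by rewrite sin_ge0_pi //; apply/andP; split; lra.
  rewrite le_eqVlt; apply/orP; left; apply/eqP; apply: eq_bigr => y _; congr (_ * `|_|).
  by rewrite /g; ring.
rewrite (eq_bigr (fun l => sin a * tt l + h * cos a * (tt l * \sum_(y < n) q y l)
   - a * cos a * tt l)); last by move=> l _; ring.
rewrite sumrB big_split /= -!mulr_sumr.
have tts : \sum_(l < m) tt l = 1 := tt1.
have tq : \sum_(l < m) tt l * \sum_(y < n) q y l = Tsum.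
  rewrite /Tsum exchange_big; apply: eq_bigr => l _; rewrite mulr_sumr.
  by apply: eq_bigr => y _; rewrite mulrC.
rewrite tts tq.
have : h * cos a * Tsum = a * cos a by rewrite -ha; ring.
lra.
Qed.
End RL.

End Aux.
Import Aux.

Theorem mainTheorem8 (R : realType) (n m : nat) (hn : (1 <= n)%N)
  (rho : 'I_m -> 'M[R[i]]_2) (p : 'I_n -> 'I_m -> 'I_3 -> R) :
  is_LHS rho p ->
  `|W_n rho p| <= sin (pi / 2 * T_n rho p) / (n%:R * sin (pi / (2 * n%:R))).
Proof.
move=> [Hpsd [Htr [p0 p1]]].
pose al l := complex.Re (rho l ord0 ord0).
pose de l := complex.Re (rho l ord_max ord_max).
pose X l := complex.Re (rho l ord0 ord_max + rho l ord_max ord0).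
have Q : forall l s t, 0 <= al l * s ^+ 2 + de l * t ^+ 2 + X l * s * t.
  by move=> l s t; apply: psd_quad.
have al0 : forall l, 0 <= al l by move=> l; have := Q l 1 0; lra.
have de0 : forall l, 0 <= de l by move=> l; have := Q l 0 1; lra.
have HX : forall l, X l ^+ 2 <= 4 * al l * de l.
  move=> l; have q1 := Q l (X l) (- 2 * al l); have q2 := Q l (- 2 * de l) (X l).
  have q3 := Q l (X l) (-2).
  have [a0|a0] := eqVneq (al l) 0.
    have [d0|d0] := eqVneq (de l) 0.
      rewrite a0 d0 in q3 *; nra.
    have dp : 0 < de l by rewrite lt_def d0 de0.
    nra.
  have ap : 0 < al l by rewrite lt_def a0 al0.
  nra.
have tt1 : \sum_(l < m) (al l + de l) = 1.
  have := congr1 (@complex.Re R) Htr; rewrite Re_sum /= => <-.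
  by apply: eq_bigr => l _; rewrite trRe.
have WE : W_n rho p = n%:R^-1 * \sum_(y < n) \sum_(l < m) (p y l out0 - p y l out1) *
        (cos (@theta R n y) * (al l - de l) + sin (@theta R n y) * X l).
  rewrite /W_n; congr (_ * _); apply: eq_bigr => y _.
  rewrite trZX !mxE !ReB !Re_assemb /X.
  rewrite -!sumrB -!big_split /= !mulr_sumr -big_split /=.
  by apply: eq_bigr => l _; rewrite ReD /al /de; ring.
have TE : T_n rho p = n%:R^-1 * \sum_(y < n) \sum_(l < m) (p y l out0 + p y l out1) * (al l + de l).
  rewrite /T_n; congr (_ * _); apply: eq_bigr => y _.
  rewrite trRe !mxE !ReD !Re_assemb.
  rewrite -!big_split /=.
  by apply: eq_bigr => l _; rewrite /al /de; ring.
rewrite WE TE; exact: RL.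
Qed.
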